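(* For every $n\in\mathbb N$, there exist infinitely many natural numbers that are antipalindromic in at least $n$ distinct integer bases $b\ge 2$.
   Context: For an integer $b\ge 2$, every natural number $x$ has a unique base-$b$ expansion $x=a_\ell b^\ell+\dots+a_1b+a_0$ with $a_0,\dots,a_\ell\in\{0,1,\dots,b-1\}$ and $a_\ell\neq 0$. The number $x$ is antipalindromic in base $b$ if $a_j=b-1-a_{\ell-j}$ for all $j\in\{0,1,\dots,\ell\}$. *)

(* Defs.v *)
From mathcomp Require Import all_boot.
Set Implicit Arguments. Unset Strict Implicit. Unset Printing Implicit Defensive.

(* Little-endian base-b digit list [a_0; a_1; ...; a_l] of x, computed with
   fuel; with fuel >= x and b >= 2 it is the full expansion (a_l <> 0),
   and digits b 0 = [::]. *)
Fixpoint digits_aux (fuel b x : nat) : seq nat :=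
  match fuel with
  | 0 => [::]
  | fuel'.+1 => if x == 0 then [::] else (x %% b) :: digits_aux fuel' b (x %/ b)
  end.

Definition digits (b x : nat) : seq nat := digits_aux x b x.

Definition antipalindromic (b x : nat) : Prop :=
  0 < x /\
  let ds := digits b x in
  forall j, j < size ds -> nth 0 ds j = b - 1 - nth 0 ds (size ds - 1 - j).

(* Main.v *)
Require Import Defs.
From mathcomp Require Import all_boot.
From mathcomp Require Import zify.

Lemma dig2 b x a0 a1 : 0 < a1 < b -> a0 < b -> x = a1 * b + a0 -> 2 <= x ->
  digits b x = [:: a0; a1].
Proof.
move=> /andP[a1p a1b] a0b ex x2.
have xm : x %% b = a0 by rewrite ex modnMDl modn_small.
have xd : x %/ b = a1 by rewrite ex divnMDl ?divn_small ?addn0 //; lia.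
rewrite /digits.
case: x x2 ex xm xd => [|[|f]] //= _ _ xm xd.
rewrite xm xd.
have -> : (a1 == 0) = false by lia.
case: f xm xd => [|f] /= xm xd; first by rewrite modn_small.
rewrite (@modn_small a1) // divn_small //.
Qed.

Lemma anti2 c d : 2 <= c <= d -> antipalindromic d.+1 (c * d).
Proof.
move=> /andP[c2 cd].
split; first by nia.
rewrite (@dig2 d.+1 (c * d) (d.+1 - c) (c - 1)); try nia.
  move=> /= j; case: j => [|[|j]] //= _.
    lia.
  lia.
Qed.

Theorem mainTheorem14 :
  forall n : nat, forall N : nat, exists x : nat, N < x /\
    exists bs : seq nat, uniq bs /\ n <= size bs /\
      forall b, b \in bs -> 2 <= b /\ antipalindromic b x.
Proof.
move=> n N.
set K := N + n + 2.
set x := K * (n.+1)`!.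
have fp : 0 < (n.+1)`! by apply: fact_gt0.
exists x; split; first by rewrite /x /K; nia.
have dv : forall i, i < n -> (i + 2) %| (n.+1)`!.
  move=> i hi; apply: dvdn_fact; lia.
exists [seq x %/ (i + 2) + 1 | i <- iota 0 n]; split; [|split].
- rewrite map_inj_in_uniq ?iota_uniq // => i j.
  rewrite !mem_iota /= !add0n => hi hj.
  move=> e.
  have ei : x %/ (i + 2) = x %/ (j + 2) by lia.
  have xi : x = x %/ (i + 2) * (i + 2) by rewrite divnK // dvdn_mull // dv.
  have xj : x = x %/ (j + 2) * (j + 2) by rewrite divnK // dvdn_mull // dv.
  have xp : 0 < x by rewrite /x /K; nia.
  have qp : 0 < x %/ (i + 2) by move: xi xp; case: (x %/ (i + 2)) => //= ->.
  rewrite ei in xi qp.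
  nia.
- by rewrite size_map size_iota.
move=> b /mapP[i]; rewrite mem_iota add0n => /andP[_ hi] ->.
have hd := dv i hi.
have ed : x %/ (i + 2) = K * ((n.+1)`! %/ (i + 2)) by rewrite /x muln_divA.
have fq : 0 < (n.+1)`! %/ (i + 2) by rewrite divn_gt0 ?addn_gt0 ?orbT // dvdn_leq.
have xe : x = (i + 2) * (x %/ (i + 2)) by rewrite mulnC divnK // dvdn_mull.
rewrite addn1; split; first by rewrite ed /K; nia.
rewrite {2}xe; apply: anti2.
apply/andP; split; first by lia.
rewrite ed /K; nia.
Qed.
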